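(* Let $n,k,s$ be positive integers with $2\le s\le\lfloor n/k\rfloor$, write $n=ds+s_0$ with $d=\lfloor n/s\rfloor$, and assume $s_0<\min\{d,s\}$. The Cubic Code is a valid exact-repair (indeed repair-by-transfer) scheme for the Fixed Cluster Repair System with parameters $(n,k,s)$ storing a file of size $M$, with storage $\alpha$ equal to its repair bandwidth $\gamma$, where $$\gamma_{cc}(n,k,s)=\begin{cases}\dfrac{Md^{s}}{d^{s+1}-(d-\lceil\frac{k}{s+1}\rceil)^{s_1}(d-\lfloor\frac{k}{s+1}\rfloor)^{s+1-s_1}} & \text{if } s_0\ge\lfloor\frac{k}{s+1}\rfloor,\\[3mm] \dfrac{Md^{s}}{d^{s+1}-(d-s_0)(d-\lceil\frac{k-s_0}{s}\rceil)^{s_2}(d-\lfloor\frac{k-s_0}{s}\rfloor)^{s-s_2}} & \text{if } s_0<\lfloor\frac{k}{s+1}\rfloor,\end{cases}$$ with $s_1=k\bmod(s+1)$ and $s_2=(k-s_0)\bmod s$.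
   Context: FCRS: $n=ds+s_0$ servers in clusters $1,\dots,s$ of size $d$ and cluster $s+1$ of size $s_0$; server $(i,j)$ stores at most $\alpha$ units; any $k$ servers (from any clusters) must recover the file; a failed server $(r,\ell)$ is repaired (exactly) by downloading $\beta$ units from each of the $d$ servers of any cluster $i\in[s]$, $i\ne r$; repair bandwidth $\gamma=d\beta$. Cubic Code: split the file into $m$ independent chunks of size $M/m$ and encode them with a $(d^{s+1},m)$ MDS code whose codeword symbols $C_b$ are indexed by strings $b=b_{s+1}\cdots b_1$ with $b_i\in[d]$. Server $(i,j)$, $(i,j)\in([s]\times[d])\cup(\{s+1\}\times[s_0])$, stores $\{C_b: b_i=j\}$. To repair $(r,\ell)$ from cluster $i$, server $(i,j)$ sends $\{C_b:b_i=j,\ b_r=\ell\}$. The number of chunks is $m=\min\{d^{s+1}-\prod_{i=1}^{s+1}(d-k_i):k_i\in\mathbb Z_{\ge0},\ \sum_{i}k_i=k,\ k_{s+1}\le s_0\}$, the number of distinct codeword symbols held by the worst-case set of $k$ servers. *)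

(* Defs.v *)
From HB Require Import structures.
From mathcomp Require Import all_boot all_order all_algebra.
Set Implicit Arguments. Unset Strict Implicit. Unset Printing Implicit Defensive.
Import Order.TTheory GRing.Theory Num.Theory.

(* Conventions: d = n %/ s, s0 = n %% s.  Clusters 1..s+1 are indexed by
   i : 'I_s.+1 (cluster i+1); cluster s+1 is ord_max.  Positions inside a
   cluster are j : 'I_d (position j+1). *)

(* codeword-symbol indices b = b_{s+1} ... b_1, b_i in [d] *)
Definition Idx (n s : nat) := {ffun 'I_s.+1 -> 'I_(n %/ s)}.

Definition Srv (n s : nat) := ('I_s.+1 * 'I_(n %/ s))%type.

(* (i,j) is an actual server: i in [s] (cluster of size d) or
   i = s+1 and j in [s0] *)
Definition is_server (n s : nat) (p : Srv n s) : bool :=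
  (p.1 < s) || (p.2 < n %% s).

Definition stored (n s : nat) (p : Srv n s) : {set Idx n s} :=
  [set b : Idx n s | b p.1 == p.2].

Definition sent (n s : nat) (h r : Srv n s) : {set Idx n s} :=
  [set b : Idx n s | (b h.1 == h.2) && (b r.1 == r.2)].

Definition num_chunks (n k s : nat) : nat :=
  \big[minn/(n %/ s) ^ s.+1]_(kv : {ffun 'I_s.+1 -> 'I_k.+1} |
        (\sum_(i < s.+1) (kv i : nat) == k) && (kv ord_max <= n %% s))
     ((n %/ s) ^ s.+1 - \prod_(i < s.+1) (n %/ s - kv i)).

Definition is_MDS (I : finType) (A : Type) (m : nat)
  (enc : {ffun 'I_m -> A} -> I -> A) : Prop :=
  forall J : {set I}, m <= #|J| ->
    forall x y, {in J, enc x =1 enc y} -> x = y.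

Local Open Scope ring_scope.
Definition gamma_cc (R : realFieldType) (n k s : nat) (M : R) : R :=
  let d := (n %/ s)%N in let s0 := (n %% s)%N in
  if (k %/ s.+1 <= s0)%N then
    let s1 := (k %% s.+1)%N in
    M * d%:R ^+ s /
      (d%:R ^+ s.+1
       - (d%:R - ((k + s) %/ s.+1)%N%:R) ^+ s1
         * (d%:R - (k %/ s.+1)%N%:R) ^+ (s.+1 - s1))
  else
    let s2 := ((k - s0) %% s)%N in
    M * d%:R ^+ s /
      (d%:R ^+ s.+1
       - (d%:R - s0%:R)
         * (d%:R - ((k - s0 + s.-1) %/ s)%N%:R) ^+ s2
         * (d%:R - ((k - s0) %/ s)%N%:R) ^+ (s - s2)).

(* Main.v *)
Require Import Defs.
From HB Require Import structures.
From mathcomp Require Import all_boot all_order all_algebra.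
Import Order.TTheory GRing.Theory Num.Theory.
From mathcomp Require Import zify.
Set Implicit Arguments. Unset Strict Implicit. Unset Printing Implicit Defensive.

Definition E (d K m : nat) := (d - (K %/ m).+1) ^ (K %% m) * (d - K %/ m) ^ (m - K %% m).

Lemma big_two (R : Type) (idx : R) (op : Monoid.com_law idx) m (i j : 'I_m)
  (F : 'I_m -> R) : i != j ->
  \big[op/idx]_t F t = op (F i) (op (F j) (\big[op/idx]_(t | (t != i) && (t != j)) F t)).
Proof.
move=> ij; rewrite (bigD1 i) //= (bigD1 j) //=; last by rewrite eq_sym.
Qed.

Definition mv m (x : 'I_m -> nat) (i j : 'I_m) (t : 'I_m) :=
  if t == i then (x i).+1 else if t == j then (x j).-1 else x t.

Lemma mv_rest m (x : 'I_m -> nat) i j (R : Type) (idx : R) (op : Monoid.com_law idx) (f : nat -> R) :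
  \big[op/idx]_(t | (t != i) && (t != j)) f (mv x i j t) =
  \big[op/idx]_(t | (t != i) && (t != j)) f (x t).
Proof. by apply: eq_bigr => t /andP[/negbTE ti /negbTE tj]; rewrite /mv ti tj. Qed.

Lemma mv_i m (x : 'I_m -> nat) i j : mv x i j i = (x i).+1.
Proof. by rewrite /mv eqxx. Qed.
Lemma mv_j m (x : 'I_m -> nat) i j : i != j -> mv x i j j = (x j).-1.
Proof. by rewrite /mv eq_sym => /negbTE ->; rewrite eqxx. Qed.

Lemma mv_sum m (x : 'I_m -> nat) i j : i != j -> 0 < x j ->
  \sum_t mv x i j t = \sum_t x t.
Proof.
move=> ij xj; rewrite (big_two _ x ij) (big_two _ (fun t => mv x i j t) ij) mv_i mv_j //.
rewrite (mv_rest x i j _ (fun v => v)) /=; lia.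
Qed.

Lemma mv_prod m (x : 'I_m -> nat) i j d : i != j -> x i < x j -> x j <= d ->
  \prod_t (d - x t) <= \prod_t (d - mv x i j t).
Proof.
move=> ij xij xjd; rewrite (big_two _ (fun t => d - x t) ij) (big_two _ (fun t => d - mv x i j t) ij) mv_i mv_j //.
rewrite (mv_rest x i j _ (fun v => d - v)) /= mulnA [X in _ <= X]mulnA leq_mul2r.
apply/orP; right; nia.
Qed.

Lemma mv_le m (x : 'I_m -> nat) i j d : i != j -> x i < x j -> (forall t, x t <= d) ->
  forall t, mv x i j t <= d.
Proof.
move=> ij xij xd t; rewrite /mv; case: eqP => _; first by have := xd j; lia.
case: eqP => _ //; have := xd j; lia.
Qed.

Lemma mv_sq m (x : 'I_m -> nat) i j : i != j -> (x i).+1 < x j ->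
  \sum_t (mv x i j t)^2 < \sum_t (x t)^2.
Proof.
move=> ij xij; rewrite (big_two _ (fun t => (x t)^2) ij) (big_two _ (fun t => (mv x i j t)^2) ij) mv_i mv_j //.
rewrite (mv_rest x i j _ (fun v => v^2)) /=; nia.
Qed.

Lemma sum_lt m r : \sum_(t < m) (t < r : nat) = minn r m.
Proof.
elim: m => [|m IH]; first by rewrite big_ord0; lia.
rewrite big_ord_recr /= IH; case: ltnP => /= H; lia.
Qed.

Lemma balanced_eq m d (x : 'I_m -> nat) a (t0 : 'I_m) :
  (forall t, (x t == a) || (x t == a.+1)) -> x t0 = a ->
  \prod_t (d - x t) = E d (\sum_t x t) m.
Proof.
move=> H x0.
have m0 : 0 < m by apply: leq_ltn_trans (ltn_ord t0).
pose P := [set t | x t == a.+1].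
have xe t : x t = a + (t \in P).
  rewrite /P inE; case/orP: (H t) => /eqP ->; last by rewrite eqxx addn1.
  by rewrite (ltn_eqF (ltnSn a)) addn0.
have e := cardsC P; rewrite card_ord in e.
have cP : #|P| < m.
  suff : 0 < #|~: P| by lia.
  apply/card_gt0P; exists t0.
  by rewrite !inE x0 (ltn_eqF (ltnSn a)).
have sx : \sum_t x t = a * m + #|P|.
  under eq_bigr => t _ do rewrite xe.
  rewrite big_split /= sum_nat_const card_ord.
  rewrite -sum1_card big_mkcond /=; congr (_ + _); first lia.
  by rewrite [RHS]big_mkcond; apply: eq_bigr => i _; case: (i \in P).
rewrite /E sx divnMDl // modnMDl divn_small // modn_small // addn0.
rewrite (bigID (fun t => t \in P)) /=. congr (_ * _).
  rewrite (eq_bigr (fun _ => d - a.+1)) ?prod_nat_const // => t Pt; rewrite xe Pt; lia.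
rewrite (eq_bigr (fun _ => d - a)) ?prod_nat_const; last first.
  by move=> t /negbTE Pt; rewrite xe Pt addn0.
congr (_ ^ _); have -> : #|[pred t | t \notin P]| = #|~: P| by apply: eq_card => t; rewrite !inE.
by apply/eqP; rewrite -(eqn_add2l #|P|) e subnKC // ltnW.
Qed.

Lemma bal m d (x : 'I_m -> nat) : 0 < m -> (forall t, x t <= d) ->
  \prod_t (d - x t) <= E d (\sum_t x t) m.
Proof.
move=> m0; have [N] := ubnP (\sum_t (x t)^2); elim: N x => [|N IH] x // HN xd.
case: (boolP [exists i, exists j, (x i).+1 < x j]).
  case/existsP => i /existsP [j ij].
  have nij : i != j by apply/eqP => e; rewrite e in ij; lia.
  have xij : x i < x j by lia.
  apply: leq_trans (@mv_prod _ x i j d nij xij (xd j)) _.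
  rewrite -(@mv_sum _ x i j nij); last lia.
  apply: IH; [ have := @mv_sq _ x i j nij ij; lia | exact: mv_le ].
move/existsPn => H.
pose i0 : 'I_m := Ordinal m0.
case: (@arg_minnP _ i0 predT x isT) => t0 _ Ht0.
rewrite (@balanced_eq _ _ _ (x t0) t0) // => t.
have := Ht0 t isT; have := H t0; move/existsPn/(_ t); lia.
Qed.

Definition bx (m K t : nat) := K %/ m + (t < K %% m).

Lemma bx_le m K t : 0 < m -> bx m K t <= K.
Proof.
move=> m0; rewrite /bx; have := divn_eq K m; have := ltn_pmod K m0.
move: (K %/ m) (K %% m) => q r.
case: ltnP => h /=; nia.
Qed.

Lemma bx_sum m K : 0 < m -> \sum_(t < m) bx m K t = K.
Proof.
move=> m0; rewrite /bx big_split /= sum_nat_const card_ord sum_lt.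
have := ltn_pmod K m0; have := divn_eq K m; move: (K %/ m) (K %% m) => q r; lia.
Qed.

Lemma bx_prod m K d : 0 < m -> \prod_(t < m) (d - bx m K t) = E d K m.
Proof.
move=> m0; pose t0 : 'I_m := Ordinal (etrans (ltn_predL m) m0 : m.-1 < m).
rewrite (@balanced_eq _ _ (fun t : 'I_m => bx m K t) (K %/ m) t0).
- by rewrite bx_sum.
- by move=> t; rewrite /bx; case: (t < K %% m); rewrite /= ?addn0 ?addn1 eqxx ?orbT.
- have := ltn_pmod K m0; rewrite /bx /= => h.
  suff -> : (m.-1 < K %% m) = false by rewrite addn0.
  apply/negbTE; rewrite -leqNgt; lia.
Qed.

Lemma upper2 s d s0 k (kv : 'I_s.+1 -> nat) : 0 < s ->
  s0 < k %/ s.+1 -> (forall i, kv i <= d) -> \sum_i kv i = k -> kv ord_max <= s0 ->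
  \prod_i (d - kv i) <= (d - s0) * E d (k - s0) s.
Proof.
move=> s0' hs kd.
move: {2}(s0 - kv ord_max) (erefl (s0 - kv ord_max)) => N.
elim: N kv kd => [|N IH] kv kd HN sk hm.
  have e : kv ord_max = s0 by lia.
  rewrite big_ord_recr /= e mulnC leq_mul2l; apply/orP; right.
  move: sk; rewrite big_ord_recr /= e => sk.
  have -> : k - s0 = \sum_(i < s) kv (widen_ord (leqnSn s) i) by rewrite -sk addnK.
  by apply: bal.
set t := kv ord_max.
case: (boolP [exists j, t < kv j]); last first.
  move/existsPn => H; exfalso.
  have : \sum_i kv i <= \sum_(i < s.+1) t by apply: leq_sum => i _; rewrite leqNgt H.
  rewrite sum_nat_const card_ord sk.
  have : (s0.+1) * s.+1 <= k by rewrite -leq_divRL.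
  nia.
case/existsP => j tj.
have nij : ord_max != j by apply/eqP => e; rewrite -e ltnn in tj.
apply: leq_trans (@mv_prod _ kv ord_max j d nij tj (kd j)) _.
apply: IH.
- exact: mv_le.
- rewrite mv_i; lia.
- rewrite mv_sum //; lia.
- rewrite mv_i; lia.
Qed.

Lemma k_le_d n k s : 0 < k -> 0 < s -> s <= n %/ k -> k <= n %/ s.
Proof. by move=> k0 s0 h; rewrite leq_divRL // mulnC -leq_divRL. Qed.

Lemma ceilE K m : 0 < m -> 0 < K %% m -> (K + m.-1) %/ m = (K %/ m).+1.
Proof.
move=> m0 r0; have lt := ltn_pmod K m0.
have e : K + m.-1 = (K %/ m).+1 * m + (K %% m).-1.
  have := divn_eq K m; move: (K %/ m) (K %% m) r0 lt => q r r0 lt ->; nia.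
have h : (K %% m).-1 < m by move: (K %% m) lt r0 => r lt r0; lia.
by rewrite e divnMDl // (divn_small h) addn0.
Qed.

Definition Pst d s0 k s := if k %/ s.+1 <= s0 then E d k s.+1 else (d - s0) * E d (k - s0) s.

Lemma bigmin_le_seq (I : eqType) (r : seq I) (P : pred I) (F : I -> nat) x0 i :
  i \in r -> P i -> \big[minn/x0]_(j <- r | P j) F j <= F i.
Proof.
elim: r => [|j r IH] //; rewrite in_cons big_cons => /orP[/eqP <- -> | ir Pi].
  exact: geq_minl.
case: (P j); last exact: IH.
by apply: leq_trans (geq_minr _ _) (IH ir Pi).
Qed.

Lemma bigmin_le_fin (I : finType) (P : pred I) (F : I -> nat) x0 i :
  P i -> \big[minn/x0]_(j | P j) F j <= F i.
Proof. by move=> Pi; apply: bigmin_le_seq => //; rewrite mem_index_enum. Qed.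

Lemma nc_le n k s (x : 'I_s.+1 -> nat) : (forall t, x t <= k) -> \sum_t x t = k ->
  x ord_max <= n %% s -> num_chunks n k s <= (n %/ s) ^ s.+1 - \prod_t (n %/ s - x t).
Proof.
move=> xk sx xm.
pose kv : {ffun 'I_s.+1 -> 'I_k.+1} := [ffun t => inord (x t)].
have kvE t : (kv t : nat) = x t by rewrite ffunE inordK // ltnS.
have Hkv : (\sum_(i < s.+1) (kv i : nat) == k) && (kv ord_max <= n %% s).
  by rewrite kvE; under eq_bigr => i _ do rewrite kvE; rewrite sx eqxx xm.
rewrite /num_chunks; apply: leq_trans (@bigmin_le_fin _ (fun kv : {ffun 'I_s.+1 -> 'I_k.+1} => (\sum_(i < s.+1) (kv i : nat) == k) && (kv ord_max <= n %% s)) _ _ kv Hkv) _.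
by under [X in _ <= _ - X]eq_bigr => i _ do rewrite -kvE.
Qed.

Lemma exp_sub_le d a e : (d - a) ^ e <= d ^ e.
Proof. by elim: e => // e IH; rewrite !expnS leq_mul // leq_subr. Qed.

Lemma E_le d K m : 0 < m -> E d K m <= d ^ m.
Proof.
move=> m0; rewrite /E; have -> : d ^ m = d ^ (K %% m) * d ^ (m - K %% m).
  by rewrite -expnD subnKC // ltnW // ltn_pmod.
by apply: leq_mul; apply: exp_sub_le.
Qed.

Lemma Pst_le d s0 k s : 0 < s -> Pst d s0 k s <= d ^ s.+1.
Proof.
move=> s0'; rewrite /Pst; case: ifP => _; first exact: E_le.
by rewrite expnS; apply: leq_mul; [apply: leq_subr | apply: E_le].
Qed.

Lemma nc_eq n k s : 0 < k -> 0 < s -> k <= n %/ s ->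
  num_chunks n k s = (n %/ s) ^ s.+1 - Pst (n %/ s) (n %% s) k s.
Proof.
move=> k0 s0 kd.
apply/eqP; rewrite eqn_leq; apply/andP; split.
  rewrite /Pst; case: ifP => c.
    have <- := @bx_prod s.+1 k (n %/ s) (ltn0Sn s).
    apply: nc_le; [by move=> t; apply: bx_le | by apply: bx_sum |].
    rewrite /bx /= (_ : (s < k %% s.+1) = false) ?addn0 //.
    by apply/negbTE; rewrite -leqNgt -ltnS ltn_pmod.
  have c' : n %% s < k %/ s.+1 by rewrite ltnNge c.
  have s0k : n %% s <= k by apply: leq_trans (ltnW c') (leq_div _ _).
  pose x (t : 'I_s.+1) := if (t : nat) == s then n %% s else bx s (k - n %% s) t.
  have xw (i : 'I_s) : x (widen_ord (leqnSn s) i) = bx s (k - n %% s) i.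
    by rewrite /x /= (ltn_eqF (ltn_ord i)).
  have xm : x ord_max = n %% s by rewrite /x /= eqxx.
  have -> : (n %/ s - n %% s) * E (n %/ s) (k - n %% s) s = \prod_t (n %/ s - x t).
    rewrite big_ord_recr /= xm mulnC; congr (_ * _).
    rewrite -bx_prod //; apply: eq_bigr => i _; by rewrite xw.
  apply: nc_le.
  - move=> t; rewrite /x; case: eqP => _ //; apply: leq_trans (bx_le _ _ s0) _; exact: leq_subr.
  - rewrite big_ord_recr /= xm; under eq_bigr => i _ do rewrite xw.
    by rewrite bx_sum // subnK.
  - by rewrite xm.
rewrite /num_chunks; apply: (big_ind (fun v => (n %/ s) ^ s.+1 - Pst (n %/ s) (n %% s) k s <= v)).
- exact: leq_subr.
- by move=> a b ha hb; rewrite leq_min ha hb.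
move=> kv /andP[/eqP hs hm]; apply: leq_sub2l.
have kvd i : (kv i : nat) <= n %/ s by apply: leq_trans kd; rewrite -ltnS ltn_ord.
rewrite /Pst; case: ifP => c.
  have := @bal s.+1 (n %/ s) (fun i => (kv i : nat)) (ltn0Sn s) kvd; by rewrite hs.
apply: upper2 => //; by rewrite ltnNge c.
Qed.

Lemma card_box m d (F : 'I_m -> pred 'I_d) (A : {set {ffun 'I_m -> 'I_d}}) :
  (forall b, (b \in A) = [forall t, b t \in F t]) -> #|A| = \prod_t #|F t|.
Proof.
move=> HA; rewrite (_ : #|A| = #|family F|); first by rewrite card_family foldrE big_image.
apply: eq_card => b; rewrite HA; apply/forallP/familyP => h t; exact: h.
Qed.

Lemma card_stored n s (p : Srv n s) : #|stored p| = ((n %/ s) ^ s)%N.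
Proof.
pose F (t : 'I_s.+1) : pred 'I_(n %/ s) := if t == p.1 then pred1 p.2 else predT.
rewrite (@card_box _ _ F).
  rewrite (bigD1 p.1) //= /F eqxx card1 mul1n.
  rewrite (eq_bigr (fun _ => n %/ s)); last first.
    by move=> t /negbTE ->; rewrite cardT size_enum_ord.
  by rewrite prod_nat_const cardC1 card_ord.
move=> b; rewrite inE; apply/eqP/forallP => [e t | h].
  by rewrite /F; case: eqP => [->|_] //; rewrite inE e.
by have := h p.1; rewrite /F eqxx inE => /eqP.
Qed.

Lemma sum_sent n s (i r : 'I_s.+1) (l : 'I_(n %/ s)) : i != r ->
  \sum_j #|sent (i, j) (r, l)| = #|stored (r, l)|.
Proof.
move=> ir; have ri : (r == i) = false by apply/negbTE; rewrite eq_sym.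
pose X := \prod_(t | (t != i) && (t != r)) (n %/ s).
pose G (t : 'I_s.+1) : pred 'I_(n %/ s) := if t == r then pred1 l else predT.
have -> : #|stored (r, l)| = (n %/ s * X)%N.
  rewrite (@card_box _ _ G); last first.
    move=> b; rewrite inE; apply/eqP/forallP => [e t | h].
      by rewrite /G; case: eqP => [->|_] //; rewrite inE e.
    by have := h r; rewrite /G eqxx inE => /eqP.
  rewrite (big_two _ (fun t => #|G t|) ir) /= /G eqxx (negbTE ir) card1 mul1n.
  rewrite cardT size_enum_ord; congr (_ * _); apply: eq_bigr => t /andP[_ /negbTE ->].
  by rewrite cardT size_enum_ord.
have e j : #|sent (i, j) (r, l)| = X.
  pose F (t : 'I_s.+1) : pred 'I_(n %/ s) :=
    if t == i then pred1 j else if t == r then pred1 l else predT.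
  rewrite (@card_box _ _ F); last first.
    move=> b; rewrite inE /=; apply/andP/forallP => [[/eqP e1 /eqP e2] t | h].
      rewrite /F; case: eqP => [->|_]; first by rewrite inE e1.
      by case: eqP => [->|_] //; rewrite inE e2.
    split; first by have := h i; rewrite /F eqxx inE.
    by have := h r; rewrite /F ri eqxx inE.
  rewrite (big_two _ (fun t => #|F t|) ir) /= /F eqxx ri eqxx !card1 !mul1n.
  apply: eq_bigr => t /andP[/negbTE -> /negbTE ->].
  by rewrite cardT size_enum_ord.
by rewrite (eq_bigr (fun _ => X)) // sum_nat_const card_ord.
Qed.

Lemma recover_card n k s (S : {set Srv n s}) : {subset S <= is_server (s:=s)} ->
  #|S| = k -> num_chunks n k s <= #|\bigcup_(p in S) stored p|.
Proof.
move=> Ssv cS.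
pose A t := [set j : 'I_(n %/ s) | (t, j) \in S].
pose kvn t := #|A t|.
have kvE t : kvn t = \sum_j ((t, j) \in S : nat).
  rewrite /kvn -sum1_card big_mkcond /=; apply: eq_bigr => j _; rewrite inE.
  by case: ((t, j) \in S).
have sumk : \sum_t kvn t = k.
  under eq_bigr do rewrite kvE.
  rewrite pair_big /= -cS -sum1_card [RHS]big_mkcond /=.
  change (\sum_(p : Srv n s) ((p.1, p.2) \in S : nat) = \sum_(p : Srv n s) (if p \in S then 1 else 0)).
  by apply: eq_bigr => -[a b] _ /=; case: ((a, b) \in S).
have kvk t : kvn t <= k by rewrite -sumk (bigD1 t) //= leq_addr.
have kvm : kvn ord_max <= n %% s.
  apply: leq_trans (subset_leq_card (_ : A ord_max \subset [set j : 'I_(n %/ s) | j < n %% s])) _.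
    apply/subsetP => j; rewrite !inE => h; have := Ssv _ h; by rewrite /is_server unfold_in /= ltnn.
  rewrite -sum1_card big_mkcond /=.
  rewrite (eq_bigr (fun j : 'I_(n %/ s) => (j < n %% s : nat))); last first.
    by move=> j _; rewrite inE; case: (j < n %% s).
  by rewrite sum_lt geq_minl.
apply: leq_trans (nc_le kvk sumk kvm) _.
set J := \bigcup_(p in S) stored p.
have cJ : #|~: J| = \prod_t (n %/ s - kvn t).
  rewrite (@card_box _ _ (fun t => [pred j | (t, j) \notin S])).
    apply: eq_bigr => t _.
    have := cardsC (A t); rewrite card_ord => eA.
    have -> : #|[pred j | (t, j) \notin S]| = #|~: A t| by apply: eq_card => j; rewrite !inE.
    rewrite /kvn; move: eA; move: (#|A t|) (#|~: A t|) => a b; lia.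
  move=> b; rewrite inE; apply/idP/idP.
    move=> nJ; apply/forallP => t; rewrite inE; apply: contra nJ => h.
    by apply/bigcupP; exists (t, b t) => //; rewrite inE /=.
  move/forallP => h; apply/bigcupP => -[p pS]; rewrite inE => /eqP e.
  by have := h p.1; rewrite inE e -surjective_pairing pS.
have := cardsC J; rewrite card_ffun !card_ord cJ => <-.
by rewrite addnK.
Qed.

Local Open Scope ring_scope.

Lemma conv1b (R : realFieldType) d K m : (0 < m)%N -> (K <= d)%N ->
  ((d%:R : R) - ((K + m.-1) %/ m)%N%:R) ^+ (K %% m)%N = ((d - (K %/ m).+1)%N%:R) ^+ (K %% m)%N.
Proof.
move=> m0 Kd; case: (posnP (K %% m)%N) => [->|r0]; first by rewrite !expr0.
rewrite ceilE // natrB //; apply: leq_trans Kd.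
have := divn_eq K m; move: (K %/ m)%N (K %% m)%N r0 => q r r0 ->; nia.
Qed.

Lemma conv1a (R : realFieldType) d K m : (K <= d)%N ->
  ((d%:R : R) - ((K + m) %/ m.+1)%N%:R) ^+ (K %% m.+1)%N = ((d - (K %/ m.+1).+1)%N%:R) ^+ (K %% m.+1)%N.
Proof. by move=> Kd; have := @conv1b R d K m.+1 (ltn0Sn m) Kd. Qed.

Lemma conv2 (R : realFieldType) d K m : (K <= d)%N ->
  ((d%:R : R) - (K %/ m)%N%:R) = (d - K %/ m)%N%:R.
Proof. by move=> Kd; rewrite natrB //; apply: leq_trans (leq_div _ _) Kd. Qed.

Lemma gam (R : realFieldType) n k s (M : R) : (0 < k)%N -> (0 < s)%N -> (k <= n %/ s)%N ->
  (n %% s <= n %/ s)%N ->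
  gamma_cc n k s M = ((n %/ s) ^ s)%N%:R * (M / (num_chunks n k s)%:R).
Proof.
move=> k0 s0 kd s0d.
have H (a b : R) : M * a / b = a * (M / b) by rewrite mulrA [M * a]mulrC.
rewrite (nc_eq k0 s0 kd) natrB ?Pst_le // /gamma_cc /Pst.
case: ifP => c.
  by rewrite conv1a // conv2 // /E !natrM !natrX H.
have c' : (n %% s < k %/ s.+1)%N by rewrite ltnNge c.
have s0k : (n %% s <= k)%N by apply: leq_trans (ltnW c') (leq_div _ _).
have Kd : (k - n %% s <= n %/ s)%N by apply: leq_trans (leq_subr _ _) kd.
rewrite conv1b // conv2 // /E -(natrB _ s0d) !natrM !natrX H.
by congr (_ * (_ / (_ - _))); rewrite mulrA.
Qed.

Unset Implicit Arguments. Set Strict Implicit.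

Theorem theorem2 (n k s : nat) (R : realFieldType) (M : R) (A : Type)
  (enc : {ffun 'I_(num_chunks n k s) -> A} -> Idx n s -> A) :
  (0 < k)%N -> (2 <= s)%N -> (s <= n %/ k)%N ->
  (n %% s < minn (n %/ s) s)%N -> 0 < M ->
  is_MDS enc ->
  [/\
   (* recovery: the contents of any k servers determine the file *)
   (forall S : {set Srv n s}, {subset S <= is_server (s:=s)} -> #|S| = k ->
      forall x y,
        (forall p, p \in S -> {in stored p, enc x =1 enc y}) -> x = y),
   (* storage per server: alpha = gamma_cc *)
   (forall p : Srv n s, is_server p ->
      #|stored p|%:R * (M / (num_chunks n k s)%:R) = gamma_cc n k s M) &
   (* exact repair by transfer from any other cluster i in [s], with
      repair bandwidth gamma = gamma_cc *)
   (forall (r i : 'I_s.+1) (l : 'I_(n %/ s)),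
      is_server (r, l) -> (i < s)%N -> i != r ->
      [/\ (forall j : 'I_(n %/ s), is_server (i, j)),
          (forall j : 'I_(n %/ s), sent (i, j) (r, l) \subset stored (i, j)),
          stored (r, l) = \bigcup_(j : 'I_(n %/ s)) sent (i, j) (r, l) &
          \sum_(j : 'I_(n %/ s)) #|sent (i, j) (r, l)|%:R
              * (M / (num_chunks n k s)%:R) = gamma_cc n k s M])].
Proof.
move=> k0 s2 sk hs0 M0 mds.
have s0' : (0 < s)%N by apply: leq_trans s2.
have kd : (k <= n %/ s)%N := k_le_d k0 s0' sk.
have s0d : (n %% s <= n %/ s)%N by apply: ltnW; apply: leq_trans hs0 (geq_minl _ _).
have G := gam M k0 s0' kd s0d.
split.
- move=> S Ssv cS x y hxy; apply: (mds _ (recover_card Ssv cS)).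
  by move=> b /bigcupP [p pS bp]; apply: hxy pS b bp.
- by move=> p _; rewrite card_stored G.
- move=> r i l hr hi ir; split.
  + by move=> j; rewrite /is_server /= hi.
  + by move=> j; apply/subsetP => b; rewrite !inE => /andP[].
  + apply/setP => b; rewrite inE; apply/idP/bigcupP.
      by move=> h; exists (b i) => //; rewrite !inE eqxx h.
    by case=> j _; rewrite !inE => /andP[_].
  + by rewrite -big_distrl /= -natr_sum sum_sent // card_stored G.
Qed.
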